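(* Let $Q$ be a finite acyclic quiver with an admissible ordering $v_1,\dots,v_k$ of its vertices. Then there are isomorphisms of quivers ${}_\infty Q\cong\mathbb{N}Q$, ${}_{-\infty}Q\cong-\mathbb{N}Q$ and ${}_\infty\underline{Q}\cong\mathbb{Z}Q$ (identifying the vertex $\tau^{-n}v$ with $(n,v)$).
   Context: The repetitive quiver $\mathbb{Z}Q$ has vertices $\mathbb{Z}\times Q_0$ and, for each arrow $\alpha:v\to w$ of $Q$ and $n\in\mathbb{Z}$, arrows $(n,v)\to(n,w)$ and $(n,w)\to(n+1,v)$; $\mathbb{N}Q$ and $-\mathbb{N}Q$ denote its full subquivers on the vertices $(n,v)$ with $n\ge0$, resp. $n\le0$. An ordering $v_1,\dots,v_k$ of $Q_0$ is admissible if each $v_i$ is a source of the quiver obtained from $Q$ by reversing all arrows at $v_1$, then at $v_2$, ..., then at $v_{i-1}$. For a quiver $\Gamma$ and vertex $u$: $\Gamma^+(u)$ adds a new vertex $\tau^{-1}u$ and one arrow $w\to\tau^{-1}u$ for each arrow $u\to w$ of $\Gamma$; $\Gamma^-(u)$ adds a new vertex $\tau u$ and one arrow $\tau u\to w$ for each arrow $w\to u$; $\Gamma^\pm(u_1,\dots,u_m)$ means applying these successively. Define ${}_0Q={}_0\underline{Q}=Q$, ${}_nQ={}_{n-1}Q^+(\tau^{-n+1}v_1,\dots,\tau^{-n+1}v_k)$, ${}_{-n}Q={}_{-n+1}Q^-(\tau^{n-1}v_k,\dots,\tau^{n-1}v_1)$, ${}_n\underline{Q}={}_{n-1}\underline{Q}^+(\tau^{-n+1}v_1,\dots,\tau^{-n+1}v_k)^-(\tau^{n-1}v_k,\dots,\tau^{n-1}v_1)$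 (with $\tau^{-j}$, $\tau^{j}$ of a new vertex meaning the iterated new vertices), and ${}_\infty Q=\bigcup_n{}_nQ$, ${}_{-\infty}Q=\bigcup_n{}_{-n}Q$, ${}_\infty\underline{Q}=\bigcup_n{}_n\underline{Q}$. *)

(* Defs.v *)
From mathcomp Require Import all_boot all_order all_algebra.
Set Implicit Arguments. Unset Strict Implicit. Unset Printing Implicit Defensive.
Import Order.TTheory GRing.Theory Num.Theory.
Local Open Scope int_scope.

Section Quivers.
Variables (V A : finType) (s t : A -> V).

Definition acyclic : Prop :=
  forall p : seq A, cycle (fun a b => t a == s b) p -> p = [::].

Definition reverse_at (o : A -> V * V) (x : V) : A -> V * V :=
  fun a => if ((o a).1 == x) || ((o a).2 == x) then ((o a).2, (o a).1) else o a.

Definition reverse_seq (us : seq V) : A -> V * V :=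
  foldl reverse_at (fun a => (s a, t a)) us.

Definition admissible (vs : seq V) : Prop :=
  [/\ uniq vs, (forall v : V, v \in vs) &
      forall i, i < size vs ->
        forall a : A, (reverse_seq (take i vs) a).2 != nth (s a) vs i].

(* (n, v) stands for tau^{-n} v *)
Definition vtx := (int * V)%type.
Definition tauinv (x : vtx) : vtx := ((x.1 + 1)%R, x.2).
Definition tau (x : vtx) : vtx := ((x.1 - 1)%R, x.2).

Record quiverIn := QuiverIn {
  qvert : vtx -> Prop;
  qarr : Type;
  qsrc : qarr -> vtx;
  qtgt : qarr -> vtx }.

(* isomorphism of quivers which is the identity on (identified) vertices *)
Definition qiso (G H : quiverIn) : Prop :=
  (forall x, @qvert G x <-> @qvert H x) /\
  exists f : qarr G -> qarr H, bijective f /\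
    forall a, @qsrc H (f a) = @qsrc G a /\ @qtgt H (f a) = @qtgt G a.

(* ---------- finite stages: vertex list and arrow list (arrow i = i-th pair) ---------- *)
Record stage := Stage { sverts : seq vtx; sarrs : seq (vtx * vtx) }.

Definition Q0stage : stage :=
  Stage [seq ((0%:Z), v) | v <- enum V] [seq (((0%:Z), s a), ((0%:Z), t a)) | a <- enum A].

Definition plus1 (G : stage) (u : vtx) : stage :=
  Stage (rcons (sverts G) (tauinv u))
        (sarrs G ++ [seq (e.2, tauinv u) | e <- sarrs G & e.1 == u]).

Definition minus1 (G : stage) (u : vtx) : stage :=
  Stage (rcons (sverts G) (tau u))
        (sarrs G ++ [seq (tau u, e.1) | e <- sarrs G & e.2 == u]).

Definition plusL (G : stage) (us : seq vtx) := foldl plus1 G us.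
Definition minusL (G : stage) (us : seq vtx) := foldl minus1 G us.

Definition layer (vs : seq V) (n : int) : seq vtx := [seq (n, v) | v <- vs].

Fixpoint posQ (vs : seq V) (n : nat) : stage :=
  if n is m.+1 then plusL (posQ vs m) (layer vs m%:Z) else Q0stage.

Fixpoint negQ (vs : seq V) (n : nat) : stage :=
  if n is m.+1 then minusL (negQ vs m) (layer (rev vs) (- m%:Z)%R) else Q0stage.

Fixpoint biQ (vs : seq V) (n : nat) : stage :=
  if n is m.+1 then
    minusL (plusL (biQ vs m) (layer vs m%:Z)) (layer (rev vs) (- m%:Z)%R)
  else Q0stage.

(* union of the increasing chain of stages (each stage extends the previous one;
   an arrow is identified by its position i together with its endpoints) *)
Definition unionQ (G : nat -> stage) : quiverIn :=
  @QuiverIn (fun x => exists n, x \in sverts (G n))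
            {p : nat * (vtx * vtx) | exists n, onth (sarrs (G n)) p.1 = Some p.2}
            (fun p => (sval p).2.1) (fun p => (sval p).2.2).

Definition infQ vs := unionQ (posQ vs).
Definition minfQ vs := unionQ (negQ vs).
Definition infQu vs := unionQ (biQ vs).

(* arrows (n, a, false) : (n, s a) -> (n, t a);  (n, a, true) : (n, t a) -> (n+1, s a) *)
Definition ZQsrc (x : int * A * bool) : vtx :=
  if x.2 then (x.1.1, t x.1.2) else (x.1.1, s x.1.2).
Definition ZQtgt (x : int * A * bool) : vtx :=
  if x.2 then ((x.1.1 + 1)%R, s x.1.2) else (x.1.1, t x.1.2).

Definition fullZQ (P : int -> Prop) : quiverIn :=
  @QuiverIn (fun x => P x.1)
            {x : int * A * bool | P (ZQsrc x).1 /\ P (ZQtgt x).1}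
            (fun x => ZQsrc (sval x)) (fun x => ZQtgt (sval x)).

Definition ZQ := fullZQ (fun _ => True).
Definition NQ := fullZQ (fun n => (0 <= n)%R).
Definition mNQ := fullZQ (fun n => (n <= 0)%R).

End Quivers.

(* Main.v *)
Require Import Defs.
From mathcomp Require Import all_boot all_order all_algebra.
From mathcomp Require Import zify.
From Stdlib Require Import ClassicalEpsilon ProofIrrelevance.
Set Implicit Arguments. Unset Strict Implicit. Unset Printing Implicit Defensive.
Import Order.TTheory GRing.Theory Num.Theory.

Section Aux.
Variables (V A : finType) (s t : A -> V).
Local Open Scope ring_scope.

Definition lab := (int * A * bool)%type.
Definition ends (x : lab) : vtx V * vtx V := (ZQsrc s t x, ZQtgt s t x).

Definition plusLab (x : lab) : lab :=
  if x.2 then (x.1.1 + 1, x.1.2, false) else (x.1.1, x.1.2, true).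
Definition plusInv (x : lab) : lab :=
  if x.2 then (x.1.1, x.1.2, false) else (x.1.1 - 1, x.1.2, true).

Lemma plusLabK : cancel plusLab plusInv.
Proof. case=> [[n a] []]; rewrite /plusLab /plusInv //=; congr (_, _, _); lia. Qed.
Lemma plusInvK : cancel plusInv plusLab.
Proof. case=> [[n a] []]; rewrite /plusLab /plusInv //=; congr (_, _, _); lia. Qed.

Definition plusLs (L : seq lab) (u : vtx V) : seq lab :=
  L ++ map plusLab (filter (fun x => ZQsrc s t x == u) L).
Definition minusLs (L : seq lab) (u : vtx V) : seq lab :=
  L ++ map plusInv (filter (fun x => ZQtgt s t x == u) L).

Lemma plus1_ends G L u : sarrs G = map ends L ->
  sarrs (plus1 G u) = map ends (plusLs L u).
Proof.
move=> H; rewrite /plus1 /plusLs /= H map_cat filter_map -!map_comp.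
congr (_ ++ _); apply/eq_in_map => x; rewrite mem_filter => /andP[/eqP <- _].
by case: x => [[n a] []].
Qed.

Lemma minus1_ends G L u : sarrs G = map ends L ->
  sarrs (minus1 G u) = map ends (minusLs L u).
Proof.
move=> H; rewrite /minus1 /minusLs /= H map_cat filter_map -!map_comp.
congr (_ ++ _); apply/eq_in_map => x; rewrite mem_filter => /andP[/eqP <- _].
by case: x => [[n a] []]; rewrite /ends /tau /plusInv /ZQsrc /ZQtgt /= ?addrK ?subrK.
Qed.

Lemma plusL_ends G L us : sarrs G = map ends L ->
  sarrs (plusL G us) = map ends (foldl plusLs L us).
Proof.
rewrite /plusL; elim: us G L => //= u us IH G L H; apply: IH; exact: plus1_ends.
Qed.

Lemma minusL_ends G L us : sarrs G = map ends L ->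
  sarrs (minusL G us) = map ends (foldl minusLs L us).
Proof.
rewrite /minusL; elim: us G L => //= u us IH G L H; apply: IH; exact: minus1_ends.
Qed.

Lemma plusL_verts (G : stage V) us : sverts (plusL G us) = sverts G ++ map (@tauinv V) us.
Proof.
rewrite /plusL; elim: us G => [|u us IH] G /=; first by rewrite cats0.
by rewrite IH /= cat_rcons.
Qed.

Lemma minusL_verts (G : stage V) us : sverts (minusL G us) = sverts G ++ map (@tau V) us.
Proof.
rewrite /minusL; elim: us G => [|u us IH] G /=; first by rewrite cats0.
by rewrite IH /= cat_rcons.
Qed.

Lemma plusLs_pre L us : exists r, foldl plusLs L us = L ++ r.
Proof.
elim: us L => [|u us IH] L /=; first by exists [::]; rewrite cats0.
by case: (IH (plusLs L u)) => r ->; eexists; rewrite /plusLs -catA.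
Qed.

Lemma minusLs_pre L us : exists r, foldl minusLs L us = L ++ r.
Proof.
elim: us L => [|u us IH] L /=; first by exists [::]; rewrite cats0.
by case: (IH (minusLs L u)) => r ->; eexists; rewrite /minusLs -catA.
Qed.

Lemma mem_layer (c : int) (ws : seq V) (x : vtx V) :
  (x \in [seq (c, w) | w <- ws]) = (x.1 == c) && (x.2 \in ws).
Proof.
case: x => n v /=; apply/mapP/andP => [[w hw [-> ->]] // | [/eqP -> hv]].
by exists v.
Qed.

End Aux.

Section Main.
Variables (V A : finType) (s t : A -> V) (vs : seq V).
Hypothesis hadm : admissible s t vs.
Local Open Scope ring_scope.

Lemma uniq_vs : uniq vs. Proof. by case: hadm. Qed.
Lemma all_vs v : v \in vs. Proof. by case: hadm. Qed.

Lemma rev_fixed us (o : A -> V * V) a :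
  (o a).1 \notin us -> (o a).2 \notin us -> foldl (@reverse_at V A) o us a = o a.
Proof.
elim: us o => //= x us IH o; rewrite !in_cons !negb_or => /andP[h1 h1'] /andP[h2 h2'].
have e : reverse_at o x a = o a.
  by rewrite /reverse_at (negbTE h1) (negbTE h2).
by rewrite IH ?e.
Qed.

Lemma take_index_notin (x : V) (l : seq V) : x \notin take (index x l) l.
Proof.
elim: l => //= y l IH; case: eqP => [->|ne] //=.
rewrite in_cons negb_or IH andbT; apply/eqP => e; apply: ne; by rewrite e.
Qed.

Lemma src_before a : s a \in take (index (t a) vs) vs.
Proof.
case: hadm => uq allv H.
have hi : (index (t a) vs < size vs)%N by rewrite index_mem.
have := H _ hi a; rewrite /reverse_seq.
case E: (s a \in take _ _) => //.
by rewrite rev_fixed /= ?E ?take_index_notin // nth_index // eqxx.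
Qed.

Lemma fwd P rest a : P ++ rest = vs -> t a \in P -> (s a \in P) && (s a != t a).
Proof.
move=> hP ht; have h := src_before a; apply/andP; split; last first.
  by apply/eqP => e; move: h; rewrite e (negbTE (take_index_notin _ _)).
move: h; rewrite -hP index_cat ht take_cat index_mem ht; exact: mem_take.
Qed.

Lemma fwd_plus P v rest a : P ++ v :: rest = vs -> t a = v -> s a \in P.
Proof.
move=> hP ht.
have := @fwd (rcons P v) rest a; rewrite cat_rcons hP ht mem_rcons mem_head.
case/(_ erefl erefl)/andP; rewrite mem_rcons in_cons => /orP[/eqP ->|//]; by rewrite eqxx.
Qed.

Lemma fwd_minus R v rest a : R ++ v :: rest = rev vs -> s a = v -> t a \in R.
Proof.
move=> hR hs; apply/negPn/negP => hn.
have hvs : vs = rev rest ++ v :: rev R.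
  by rewrite -(revK vs) -hR rev_cat rev_cons cat_rcons.
have hu := uniq_vs; rewrite hvs cat_uniq /= negb_or in hu.
case/and3P: hu => _ /andP[hv _] _.
have := @fwd vs [::] a; rewrite cats0 => /(_ erefl (all_vs _)) /andP[_ hne].
rewrite mem_rev in hv.
have : t a \in rest.
  move: (all_vs (t a)); rewrite {1}hvs mem_cat in_cons !mem_rev (negbTE hn) orbF.
  by case/orP => // /eqP e; move: hne; rewrite hs e eqxx.
move=> ht; have := @fwd (rev rest) (v :: rev R) a; rewrite -hvs !mem_rev => /(_ erefl ht).
by rewrite hs (negbTE hv).
Qed.


Definition box (lo hi : int) (x : lab A) : bool :=
  (lo <= x.1.1) && (if x.2 then x.1.1 < hi else x.1.1 <= hi).

Definition memP (lo m : int) (P : seq V) (x : lab A) : bool :=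
  [|| box lo m x, [&& x.1.1 == m, x.2 & s x.1.2 \in P] |
      [&& x.1.1 == m + 1, ~~ x.2 & t x.1.2 \in P]].

Lemma plus_step lo m P v L : lo <= m -> v \notin P ->
  (forall a, t a = v -> s a \in P) -> uniq L ->
  (forall x, (x \in L) = memP lo m P x) ->
  uniq (plusLs s t L (m, v)) /\
  (forall x, (x \in plusLs s t L (m, v)) = memP lo m (rcons P v) x).
Proof.
move=> hlo hv hfw hu hL.
have memN x : (x \in map (@plusLab A) (filter (fun y => ZQsrc s t y == (m, v)) L))
    = (ZQsrc s t (plusInv x) == (m, v)) && memP lo m P (plusInv x).
  by rewrite -{1}(plusInvK x) (mem_map (can_inj (@plusLabK A))) mem_filter hL.
split.
  rewrite /plusLs cat_uniq hu (map_inj_uniq (can_inj (@plusLabK A))) filter_uniq // andbT /=.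
  apply/hasPn => x; rewrite memN /= hL.
  case: x => [[n a] []]; rewrite /memP /box /plusInv /ZQsrc /= xpair_eqE.
    move=> /andP[/andP[/eqP en /eqP ea] _]; rewrite ea (negbTE hv) en !andbF; lia.
  move=> /andP[/andP[/eqP en /eqP ea] _]; rewrite ea (negbTE hv) !andbF orbF.
  lia.
move=> x; rewrite /plusLs mem_cat hL memN.
case: x => [[n a] []]; rewrite /memP /box /plusInv /ZQsrc /= xpair_eqE mem_rcons in_cons.
  case: (s a =P v) => [ea|ne] /=; [rewrite ea (negbTE hv)|];
    case: (s a \in P); case: (t a \in P); lia.
case: (t a =P v) => [ea|ne] /=; [rewrite (hfw _ ea) ea|];
  case: (s a \in P); case: (t a \in P); case: (v \in P); lia.
Qed.

Definition memM (c hi : int) (R : seq V) (x : lab A) : bool :=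
  [|| box c hi x, [&& x.1.1 == c - 1, x.2 & t x.1.2 \in R] |
      [&& x.1.1 == c - 1, ~~ x.2 & s x.1.2 \in R]].

Lemma minus_step c hi R v L : c <= hi -> v \notin R ->
  (forall a, s a = v -> t a \in R) -> uniq L ->
  (forall x, (x \in L) = memM c hi R x) ->
  uniq (minusLs s t L (c, v)) /\
  (forall x, (x \in minusLs s t L (c, v)) = memM c hi (rcons R v) x).
Proof.
move=> hlo hv hfw hu hL.
have memN x : (x \in map (@plusInv A) (filter (fun y => ZQtgt s t y == (c, v)) L))
    = (ZQtgt s t (plusLab x) == (c, v)) && memM c hi R (plusLab x).
  by rewrite -{1}(plusLabK x) (mem_map (can_inj (@plusInvK A))) mem_filter hL.
split.
  rewrite /minusLs cat_uniq hu (map_inj_uniq (can_inj (@plusInvK A))) filter_uniq // andbT /=.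
  apply/hasPn => x; rewrite memN /= hL.
  case: x => [[n a] []]; rewrite /memM /box /plusLab /ZQtgt /= xpair_eqE;
    move=> /andP[/andP[/eqP en /eqP ea] _]; rewrite ea (negbTE hv);
    case: (s a \in R); case: (t a \in R); lia.
move=> x; rewrite /minusLs mem_cat hL memN.
case: x => [[n a] []]; rewrite /memM /box /plusLab /ZQtgt /= xpair_eqE mem_rcons in_cons.
  case: (t a =P v) => [ea|ne] /=; [rewrite ea (negbTE hv)|];
    case: (s a \in R); case: (t a \in R); lia.
case: (s a =P v) => [ea|ne] /=; [rewrite (hfw _ ea) ea|];
  case: (s a \in R); case: (t a \in R); case: (v \in R); lia.
Qed.

Lemma plus_layer lo m (hlo : lo <= m) rest : forall P L, P ++ rest = vs -> uniq L ->
  (forall x, (x \in L) = memP lo m P x) ->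
  uniq (foldl (plusLs s t) L [seq (m, v) | v <- rest]) /\
  forall x, (x \in foldl (plusLs s t) L [seq (m, v) | v <- rest]) = memP lo m vs x.
Proof.
elim: rest => [|v rest IH] P L hP hu hL /=.
  by rewrite cats0 in hP; subst.
have hvP : v \notin P.
  have := uniq_vs; rewrite -hP cat_uniq => /and3P[_ hn _]; apply: contra hn => hvP.
  by apply/hasP; exists v; rewrite ?mem_head.
have [hu' hL'] := @plus_step lo m P v L hlo hvP (fun a => @fwd_plus P v rest a hP) hu hL.
by apply: IH hu' hL'; rewrite cat_rcons.
Qed.

Lemma minus_layer c hi (hlo : c <= hi) rest : forall R L, R ++ rest = rev vs -> uniq L ->
  (forall x, (x \in L) = memM c hi R x) ->
  uniq (foldl (minusLs s t) L [seq (c, v) | v <- rest]) /\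
  forall x, (x \in foldl (minusLs s t) L [seq (c, v) | v <- rest]) = memM c hi (rev vs) x.
Proof.
elim: rest => [|v rest IH] R L hR hu hL /=.
  by rewrite cats0 in hR; subst.
have hvR : v \notin R.
  have := uniq_vs; rewrite -rev_uniq -hR cat_uniq => /and3P[_ hn _]; apply: contra hn => hvR.
  by apply/hasP; exists v; rewrite ?mem_head.
have [hu' hL'] := @minus_step c hi R v L hlo hvR (fun a => @fwd_minus R v rest a hR) hu hL.
by apply: IH hu' hL'; rewrite cat_rcons.
Qed.

Lemma memP_nil lo m x : memP lo m [::] x = box lo m x.
Proof. by rewrite /memP !in_nil !andbF !orbF. Qed.
Lemma memM_nil c hi x : memM c hi [::] x = box c hi x.
Proof. by rewrite /memM !in_nil !andbF !orbF. Qed.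
Lemma memP_all lo m x : lo <= m -> memP lo m vs x = box lo (m + 1) x.
Proof. by move=> h; case: x => [[n a] []]; rewrite /memP /box /= !all_vs; lia. Qed.
Lemma memM_all c hi x : c <= hi -> memM c hi (rev vs) x = box (c - 1) hi x.
Proof. by move=> h; case: x => [[n a] []]; rewrite /memM /box /= !mem_rev !all_vs; lia. Qed.

Lemma plus_full lo m L : lo <= m -> uniq L -> (forall x, (x \in L) = box lo m x) ->
  uniq (foldl (plusLs s t) L (layer vs m)) /\
  forall x, (x \in foldl (plusLs s t) L (layer vs m)) = box lo (m + 1) x.
Proof.
move=> hlo hu hL; have [] := @plus_layer lo m hlo vs [::] L erefl hu.
  by move=> x; rewrite memP_nil.
by move=> -> h; split => // x; rewrite h memP_all.
Qed.

Lemma minus_full c hi L : c <= hi -> uniq L -> (forall x, (x \in L) = box c hi x) ->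
  uniq (foldl (minusLs s t) L (layer (rev vs) c)) /\
  forall x, (x \in foldl (minusLs s t) L (layer (rev vs) c)) = box (c - 1) hi x.
Proof.
move=> hlo hu hL; have [] := @minus_layer c hi hlo (rev vs) [::] L erefl hu.
  by move=> x; rewrite memM_nil.
by move=> -> h; split => // x; rewrite h memM_all.
Qed.
End Main.

Section UI.
Variables (V A : finType) (s t : A -> V).
Local Open Scope ring_scope.

Lemma onth_index (T : eqType) (x : T) l : x \in l -> onth l (index x l) = Some x.
Proof.
move=> h; have si : (index x l < size l)%N by rewrite index_mem.
case E: (onth l (index x l)) => [y|]; last by move: si; rewrite -onthTE E.
by rewrite -(onth_nth x _ _ _ E) nth_index.
Qed.

Lemma onth_uidx (T : eqType) (l : seq T) i j x : uniq l ->
  onth l i = Some x -> onth l j = Some x -> i = j.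
Proof.
move=> hu hi hj.
have si : (i < size l)%N by rewrite -onthTE hi.
have sj : (j < size l)%N by rewrite -onthTE hj.
apply/eqP; rewrite -(nth_uniq x si sj hu) (onth_nth x _ _ _ hi) (onth_nth x _ _ _ hj) //.
Qed.

Lemma union_iso (G : nat -> stage V) (L : nat -> seq (lab A)) (P : int -> Prop)
    (N : lab A -> nat) :
  (forall n, sarrs (G n) = map (ends s t) (L n)) ->
  (forall n, exists r, L n.+1 = L n ++ r) ->
  (forall n, uniq (L n)) ->
  (forall x, P (ZQsrc s t x).1 /\ P (ZQtgt s t x).1 -> x \in L (N x)) ->
  (forall n x, x \in L n -> P (ZQsrc s t x).1 /\ P (ZQtgt s t x).1) ->
  (forall x, (exists n, x \in sverts (G n)) <-> P x.1) ->
  qiso (unionQ G) (fullZQ s t P).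
Proof.
move=> hG hpre hu hN hP hV.
have pre n m : (n <= m)%N -> exists r, L m = L n ++ r.
  elim: m => [|m IH]; first by rewrite leqn0 => /eqP ->; exists [::]; rewrite cats0.
  rewrite leq_eqVlt ltnS => /orP[/eqP -> | /IH [r e]]; first by exists [::]; rewrite cats0.
  by case: (hpre m) => r' ->; rewrite e -catA; eexists.
have ext n m i x : (n <= m)%N -> onth (L n) i = Some x -> onth (L m) i = Some x.
  move=> h h1; case: (pre _ _ h) => r ->; rewrite onth_cat.
  have -> : (i < size (L n))%N by rewrite -onthTE h1.
  exact: h1.
have agree n m i x y : onth (L n) i = Some x -> onth (L m) i = Some y -> x = y.
  move=> h1 h2; have := ext n (maxn n m) i x (leq_maxl _ _) h1.
  by rewrite (ext m (maxn n m) i y (leq_maxr _ _) h2) => [[]].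
have ex (p : qarr (unionQ G)) :
    exists y : qarr (fullZQ s t P), exists n, onth (L n) (sval p).1 = Some (sval y).
  case: p => [[i e] [n hn]] /=; rewrite hG onth_map in hn.
  case E: (onth (L n) i) hn => [x|] //= [hx].
  have hx' : x \in L n by apply/onthP; exists i.
  by exists (exist _ x (hP n x hx')); exists n.
pose f p := sval (constructive_indefinite_description _ (ex p)).
have fP p : exists n, onth (L n) (sval p).1 = Some (sval (f p)).
  exact: (proj2_sig (constructive_indefinite_description _ (ex p))).
have fE p : (sval p).2 = ends s t (sval (f p)).
  case: (fP p) => n hn; case: (proj2_sig p) => n' h'.
  rewrite hG onth_map in h'; case E: onth h' => [x|] //= [<-].
  by rewrite (agree _ _ _ _ _ E hn).
have gpf (y : qarr (fullZQ s t P)) : exists n,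
    onth (sarrs (G n)) (index (sval y) (L (N (sval y)))) = Some (ends s t (sval y)).
  exists (N (sval y)); rewrite hG onth_map onth_index //; exact: hN (proj2_sig y).
pose g : qarr (fullZQ s t P) -> qarr (unionQ G) := fun y =>
  exist _ (index (sval y) (L (N (sval y))), ends s t (sval y)) (gpf y).
split; first by move=> x /=; exact: hV.
exists f; split; last by move=> p /=; rewrite fE.
exists g.
  move=> p; apply: eq_sig_hprop => [? ? ?|]; first exact: proof_irrelevance.
  rewrite /= [sval p]surjective_pairing -fE; congr (_, _).
  case: (fP p) => n hn.
  have hxN : sval (f p) \in L (N (sval (f p))) by exact: hN (proj2_sig (f p)).
  apply: (@onth_uidx _ (L (maxn n (N (sval (f p))))) _ _ (sval (f p)) (hu _)).
    by apply: ext (leq_maxr _ _) _; rewrite onth_index.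
  exact: ext (leq_maxl _ _) hn.
move=> y; apply: eq_sig_hprop => [? ? ?|]; first exact: proof_irrelevance.
case: (fP (g y)) => n /= hn.
have hy : sval y \in L (N (sval y)) by exact: hN (proj2_sig y).
exact: agree hn (onth_index hy).
Qed.
End UI.

Section Concrete.
Variables (V A : finType) (s t : A -> V) (vs : seq V).
Hypothesis hadm : admissible s t vs.
Local Open Scope ring_scope.

Definition L0 : seq (lab A) := [seq (0%:Z, a, false) | a <- enum A].
Fixpoint posL n := if n is m.+1 then foldl (plusLs s t) (posL m) (layer vs m%:Z) else L0.
Fixpoint negL n :=
  if n is m.+1 then foldl (minusLs s t) (negL m) (layer (rev vs) (- m%:Z)) else L0.
Fixpoint biL n := if n is m.+1 then
  foldl (minusLs s t) (foldl (plusLs s t) (biL m) (layer vs m%:Z)) (layer (rev vs) (- m%:Z))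
  else L0.

Lemma L0_ok : uniq L0 /\ forall x, (x \in L0) = box 0 0 x.
Proof.
split; first by rewrite map_inj_uniq ?enum_uniq // => a b [].
case=> [[n a] b]; rewrite /box /=; apply/mapP/idP => [[a0 _ [-> _ ->]] //| h].
exists a; rewrite ?mem_enum //; case: b h => h; first by exfalso; lia.
by have -> : n = 0 by lia.
Qed.

Lemma posL_ok n : uniq (posL n) /\ forall x, (x \in posL n) = box 0 n%:Z x.
Proof.
elim: n => [|m [hu hL]] /=; first exact: L0_ok.
have [] := @plus_full _ _ s t vs hadm 0 m%:Z _ _ hu hL; first lia.
by move=> -> h; split => // x; rewrite h; congr box; lia.
Qed.

Lemma negL_ok n : uniq (negL n) /\ forall x, (x \in negL n) = box (- n%:Z) 0 x.
Proof.
elim: n => [|m [hu hL]] /=; first by rewrite oppr0; exact: L0_ok.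
have [] := @minus_full _ _ s t vs hadm (- m%:Z) 0 _ _ hu hL; first lia.
by move=> -> h; split => // x; rewrite h; congr box; lia.
Qed.

Lemma biL_ok n : uniq (biL n) /\ forall x, (x \in biL n) = box (- n%:Z) n%:Z x.
Proof.
elim: n => [|m [hu hL]] /=; first by rewrite oppr0; exact: L0_ok.
have [] := @plus_full _ _ s t vs hadm (- m%:Z) m%:Z _ _ hu hL; first lia.
move=> hu' hL'.
have [] := @minus_full _ _ s t vs hadm (- m%:Z) (m%:Z + 1) _ _ hu' hL'; first lia.
by move=> -> h; split => // x; rewrite h; congr box; lia.
Qed.

Lemma L0_arr : sarrs (Q0stage s t) = map (ends s t) L0.
Proof. rewrite /L0 -map_comp; apply: eq_map => a; by []. Qed.

Lemma posQ_arr n : sarrs (posQ s t vs n) = map (ends s t) (posL n).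
Proof. elim: n => [|m IH] /=; [exact: L0_arr | exact: plusL_ends]. Qed.
Lemma negQ_arr n : sarrs (negQ s t vs n) = map (ends s t) (negL n).
Proof. elim: n => [|m IH] /=; [exact: L0_arr | exact: minusL_ends]. Qed.
Lemma biQ_arr n : sarrs (biQ s t vs n) = map (ends s t) (biL n).
Proof.
elim: n => [|m IH] /=; first exact: L0_arr.
by apply: minusL_ends; apply: plusL_ends.
Qed.

Lemma posL_pre n : exists r, posL n.+1 = posL n ++ r.
Proof. exact: plusLs_pre. Qed.
Lemma negL_pre n : exists r, negL n.+1 = negL n ++ r.
Proof. exact: minusLs_pre. Qed.
Lemma biL_pre n : exists r, biL n.+1 = biL n ++ r.
Proof.
rewrite /=; have [r1 ->] := plusLs_pre s t (biL n) (layer vs n%:Z).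
have [r2 ->] := minusLs_pre s t (biL n ++ r1) (layer (rev vs) (- n%:Z)).
by rewrite -catA; eexists.
Qed.

Lemma allv v : v \in vs. Proof. by case: hadm. Qed.

Lemma Q0_verts x : (x \in sverts (Q0stage s t)) = (x.1 == 0).
Proof. by rewrite /= mem_layer mem_enum andbT. Qed.

Lemma tauinv_layer (ws : seq V) (c : int) :
  map (@tauinv V) (layer ws c) = [seq (c + 1, w) | w <- ws].
Proof. by rewrite /layer -map_comp. Qed.
Lemma tau_layer (ws : seq V) (c : int) :
  map (@tau V) (layer ws c) = [seq (c - 1, w) | w <- ws].
Proof. by rewrite /layer -map_comp. Qed.

Lemma posQ_verts n x : (x \in sverts (posQ s t vs n)) = (0 <= x.1) && (x.1 <= n%:Z).
Proof.
elim: n => [|m IH] /=; first by rewrite Q0_verts; case: x => k v /=; lia.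
rewrite plusL_verts mem_cat IH tauinv_layer mem_layer allv andbT; case: x {IH} => k v /=; lia.
Qed.
Lemma negQ_verts n x : (x \in sverts (negQ s t vs n)) = (- n%:Z <= x.1) && (x.1 <= 0).
Proof.
elim: n => [|m IH] /=; first by rewrite Q0_verts; case: x => k v /=; lia.
rewrite minusL_verts mem_cat IH tau_layer mem_layer mem_rev allv andbT; case: x {IH} => k v /=; lia.
Qed.
Lemma biQ_verts n x : (x \in sverts (biQ s t vs n)) = (- n%:Z <= x.1) && (x.1 <= n%:Z).
Proof.
elim: n => [|m IH] /=; first by rewrite Q0_verts; case: x => k v /=; lia.
rewrite minusL_verts plusL_verts !mem_cat IH tauinv_layer tau_layer !mem_layer.
rewrite mem_rev allv !andbT; case: x {IH} => k v /=; lia.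
Qed.

End Concrete.

Theorem proposition5p9 (V A : finType) (s t : A -> V) (vs : seq V) :
  acyclic s t -> admissible s t vs ->
  [/\ qiso (infQ s t vs) (NQ s t),
      qiso (minfQ s t vs) (mNQ s t) &
      qiso (infQu s t vs) (ZQ s t)].
Proof.
move=> _ hadm; split.
- apply: (@union_iso _ _ s t (posQ s t vs) (posL s t vs) _ (fun x => (absz x.1.1).+1)).
  + exact: posQ_arr.
  + exact: posL_pre.
  + by move=> n; case: (posL_ok hadm n).
  + move=> x hx; have [_ ->] := posL_ok hadm (absz x.1.1).+1.
    case: x hx => [[k a] []]; rewrite /box /ZQsrc /ZQtgt /= => -[h1 h2]; lia.
  + move=> n x; have [_ ->] := posL_ok hadm n.
    case: x => [[k a] []]; rewrite /box /ZQsrc /ZQtgt /= => h; split; lia.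
  + move=> [k v] /=; split => [[n hn]|h]; first by move: hn; rewrite (posQ_verts hadm) /= => hn; lia.
    by exists (absz k); rewrite (posQ_verts hadm) /=; lia.
- apply: (@union_iso _ _ s t (negQ s t vs) (negL s t vs) _ (fun x => (absz x.1.1).+1)).
  + exact: negQ_arr.
  + exact: negL_pre.
  + by move=> n; case: (negL_ok hadm n).
  + move=> x hx; have [_ ->] := negL_ok hadm (absz x.1.1).+1.
    case: x hx => [[k a] []]; rewrite /box /ZQsrc /ZQtgt /= => -[h1 h2]; lia.
  + move=> n x; have [_ ->] := negL_ok hadm n.
    case: x => [[k a] []]; rewrite /box /ZQsrc /ZQtgt /= => h; split; lia.
  + move=> [k v] /=; split => [[n hn]|h]; first by move: hn; rewrite (negQ_verts hadm) /= => hn; lia.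
    by exists (absz k); rewrite (negQ_verts hadm) /=; lia.
- apply: (@union_iso _ _ s t (biQ s t vs) (biL s t vs) _ (fun x => (absz x.1.1).+1)).
  + exact: biQ_arr.
  + exact: biL_pre.
  + by move=> n; case: (biL_ok hadm n).
  + move=> x hx; have [_ ->] := biL_ok hadm (absz x.1.1).+1.
    case: x hx => [[k a] []]; rewrite /box /ZQsrc /ZQtgt /= => -[h1 h2]; lia.
  + by move=> n x; split.
  + move=> [k v] /=; split => [//|h].
    by exists (absz k); rewrite (biQ_verts hadm) /=; lia.
Qed.
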